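(* Let $(M,c,\nabla)$ be a non-closed Lorentzian Weyl manifold of dimension $n+2\geq4$ with recurrent curvature tensor $R$, and let $U$ be a coordinate neighborhood with coordinates $v,x^1,\dots,x^n,u$ on which $c$ is represented by $g=2\,dv\,du+\sum_{i=1}^{n-1}(dx^i)^2+e^{-2F}(dx^n)^2+a(u)\sum_{i=1}^{n-1}(x^i)^2(du)^2$ with corresponding 1-form $\omega=\partial_uF\,du$, where $F=F(x^n,u)$ satisfies $\partial_u^2F-(\partial_uF)^2=-a(u)$ and $\partial_{x^n}\partial_uF$ is nowhere vanishing. Then the conformal class of $g$ on $U$ contains a metric $h$ satisfying $$\nabla h=-2\omega_h\otimes h,\qquad \nabla R=-3\omega_h\otimes R,$$ and such a metric is unique up to homothety.
   Context: A Lorentzian Weyl manifold is a triple $(M,c,\nabla)$ with $M$ a connected manifold, $c$ a conformal class of Lorentzian metrics, $\nabla$ a torsion-free connection with $\nabla g=-2\omega_g\otimes g$ for each $g\in c$ and some 1-form $\omega_g$. It is closed if $d\omega_g=0$. $R$ is recurrent if $\nabla R=\theta\otimes R$ for some 1-form $\theta$. Homothetic metrics differ by a positive constant factor. *)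

(* Defs.v *)
(* local coordinate formalization on an open subset
   of R^(n+2) (the chart image of the coordinate neighbourhood U). *)
From HB Require Import structures.
From mathcomp Require Import all_boot all_order all_algebra.
From mathcomp Require Import all_classical all_reals all_analysis.
Set Implicit Arguments. Unset Strict Implicit. Unset Printing Implicit Defensive.
Import Order.TTheory GRing.Theory Num.Theory.
Import numFieldNormedType.Exports.
Local Open Scope classical_set_scope.
Local Open Scope ring_scope.

Section WeylDefs.
Variables (R : realType) (N : nat).
(* points of R^N are row vectors; coordinate k of p is p 0 k *)
Notation V := 'rV[R]_N.

Definition ebasis (i : 'I_N) : V := delta_mx 0 i.

Definition partial (i : 'I_N) (f : V -> R) : V -> R :=
  fun p => 'D_(ebasis i) f p.

Definition iter_partial (s : seq 'I_N) (f : V -> R) : V -> R :=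
  foldr partial f s.

Definition smooth_on (U : set V) (f : V -> R) : Prop :=
  forall (s : seq 'I_N) (p : V), U p -> differentiable (iter_partial s f) p.

(* Connection coefficients: Gam l i j = Gamma^l_{ij},
   i.e. nabla_{d_i} d_j = sum_l Gamma^l_{ij} d_l. *)

(* (nabla h)_{k i j} = (nabla_{d_k} h)(d_i, d_j) *)
Definition nabla2 (Gam : 'I_N -> 'I_N -> 'I_N -> V -> R)
  (h : 'I_N -> 'I_N -> V -> R) (k i j : 'I_N) (p : V) : R :=
  partial k (h i j) p
  - \sum_(l < N) (Gam l k i p * h l j p + Gam l k j p * h i l p).

(* curvature R(d_i,d_j)d_k = sum_l Curv l i j k d_l,
   R(X,Y) = [nabla_X, nabla_Y] - nabla_[X,Y] *)
Definition Curv (Gam : 'I_N -> 'I_N -> 'I_N -> V -> R) (l i j k : 'I_N)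
  (p : V) : R :=
  partial i (Gam l j k) p - partial j (Gam l i k) p
  + \sum_(m < N) (Gam l i m p * Gam m j k p - Gam l j m p * Gam m i k p).

(* (nabla R) components: (nabla_{d_m} R)^l_{ijk} *)
Definition nablaCurv (Gam : 'I_N -> 'I_N -> 'I_N -> V -> R)
  (m l i j k : 'I_N) (p : V) : R :=
  partial m (Curv Gam l i j k) p
  + \sum_(q < N) (Gam l m q p * Curv Gam q i j k p
                  - Gam q m i p * Curv Gam l q j k p
                  - Gam q m j p * Curv Gam l i q k p
                  - Gam q m k p * Curv Gam l i j q p).

Definition weyl_on (U : set V) (Gam : 'I_N -> 'I_N -> 'I_N -> V -> R)
  (g : 'I_N -> 'I_N -> V -> R) (om : 'I_N -> V -> R) : Prop :=
  (forall p, U p -> forall l i j, Gam l i j p = Gam l j i p) /\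
  (forall p, U p -> forall k i j, nabla2 Gam g k i j p = - 2 * om k p * g i j p).

Definition recurrent_on (U : set V) (Gam : 'I_N -> 'I_N -> 'I_N -> V -> R)
  : Prop :=
  exists theta : 'I_N -> V -> R, forall p, U p -> forall m l i j k,
    nablaCurv Gam m l i j k p = theta m p * Curv Gam l i j k p.

Definition conf (phi : V -> R) (g : 'I_N -> 'I_N -> V -> R) :
  'I_N -> 'I_N -> V -> R := fun i j p => phi p * g i j p.

Definition special_conf (U : set V) (Gam : 'I_N -> 'I_N -> 'I_N -> V -> R)
  (g : 'I_N -> 'I_N -> V -> R) (phi : V -> R) : Prop :=
  exists omh : 'I_N -> V -> R,
    (forall p, U p -> forall k i j,
        nabla2 Gam (conf phi g) k i j p = - 2 * omh k p * conf phi g i j p) /\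
    (forall p, U p -> forall m l i j k,
        nablaCurv Gam m l i j k p = - 3 * omh m p * Curv Gam l i j k p).
End WeylDefs.

(* Coordinates (v, x^1, ..., x^n, u) on R^(n+2): index 0 is v,
   index i (1 <= i <= n) is x^i, index n+1 is u. *)
Definition v_idx (n : nat) : 'I_(n.+2) := ord0.
Definition u_idx (n : nat) : 'I_(n.+2) := ord_max.
Definition xn_idx (n : nat) : 'I_(n.+2) := inord n.

Section Model.
Variables (R : realType) (n : nat).
Notation V := 'rV[R]_(n.+2).

Definition Fhat (F : R -> R -> R) : V -> R :=
  fun p => F (p 0 (xn_idx n)) (p 0 (u_idx n)).

(* g = 2 dv du + sum_{i=1}^{n-1} (dx^i)^2 + e^{-2F} (dx^n)^2
       + a(u) sum_{i=1}^{n-1} (x^i)^2 (du)^2 *)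
Definition gmodel (F : R -> R -> R) (a : R -> R) :
  'I_(n.+2) -> 'I_(n.+2) -> V -> R :=
  fun i j p =>
    if ((i == v_idx n) && (j == u_idx n)) || ((i == u_idx n) && (j == v_idx n))
    then 1
    else if i != j then 0
    else if (0 < i < n)%N then 1
    else if (i == n :> nat) then expR (- 2 * Fhat F p)
    else if i == u_idx n then
      a (p 0 (u_idx n)) * \sum_(k < n.+2 | (0 < k < n)%N) (p 0 k) ^+ 2
    else 0.

Definition omodel (F : R -> R -> R) : 'I_(n.+2) -> V -> R :=
  fun k p => if k == u_idx n then partial (u_idx n) (Fhat F) p else 0.
End Model.

(* Main.v *)
Require Import Defs.
From HB Require Import structures.
From mathcomp Require Import all_boot all_order all_algebra.
From mathcomp Require Import all_classical all_reals all_analysis.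
Import Order.TTheory GRing.Theory Num.Theory.
Import numFieldNormedType.Exports.
Local Open Scope classical_set_scope.
Local Open Scope ring_scope.
From mathcomp Require Import ring lra zify.
Set Implicit Arguments. Unset Strict Implicit. Unset Printing Implicit Defensive.

Section Loc0.
Variables (R : realType) (V W : normedModType R).
Lemma near0_differentiable (h : V -> W) (p : V) :
  (\forall q \near p, h q = 0) -> differentiable h p.
Proof.
move=> hp.
have hp0 : h p = 0 := nbhs_singleton hp.
have E : h \o shift p = cst (h p) + \0 +o_ 0 id.
  apply/eqaddoP => eps eps0.
  have hs : \forall y \near (0:V), h (y + p) = 0.
    by move: hp; rewrite (near_shift 0) /= subr0.
  near=> y.
  rewrite /= hp0 addr0 subr0.
  have -> : (h \o +%R^~ p) y = 0 by rewrite /=; near: y.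
  by rewrite normr0 mulr_ge0 // ltW.
have dh : 'd h p = \0 :> (V -> W).
  apply: diff_unique => //; exact: cst_continuous.
apply/diff_locallyP; rewrite dh; split => //; exact: cst_continuous.
Unshelve. all: by end_near. Qed.
End Loc0.

Section Chain.
Variables (R : realType) (N : nat).
Notation V := 'rV[R]_N.

Lemma derive_comp1 (h : R -> R) (f : V -> R) p v :
  differentiable f p -> derivable h (f p) 1 ->
  'D_v (h \o f) p = 'D_1 h (f p) * 'D_v f p.
Proof.
move=> df dh.
have dh' : differentiable h (f p) by apply/derivable1_diffP.
rewrite deriveE; last exact: differentiable_comp.
rewrite diff_comp // /= (deriv1E dh) /= (deriveE v df) derive1E.
by rewrite mulrC.
Qed.

Lemma differentiable_exp (f : V -> R) p :
  differentiable f p -> differentiable (fun q => expR (f q)) p.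
Proof.
move=> df; apply: (@differentiable_comp _ _ _ _ f expR) => //.
by apply/derivable1_diffP; exact: derivable_expR.
Qed.

Lemma partial_exp (f : V -> R) p j :
  differentiable f p ->
  partial j (fun q => expR (f q)) p = expR (f p) * partial j f p.
Proof.
move=> df; rewrite /partial.
have := @derive_comp1 expR f p (ebasis R j) df (@derivable_expR _ _).
rewrite /comp => ->; congr (_ * _); exact: (congr1 (fun g => g (f p)) (@derive_expR R)).
Qed.

Lemma differentiable_ln (f : V -> R) p :
  differentiable f p -> 0 < f p -> differentiable (fun q => ln (f q)) p.
Proof.
move=> df fp; apply: (@differentiable_comp _ _ _ _ f (@ln R)) => //.
by apply/derivable1_diffP; apply: ex_derive; exact: is_derive1_ln.
Qed.

Lemma partial_ln (f : V -> R) p j :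
  differentiable f p -> 0 < f p ->
  partial j (fun q => ln (f q)) p = (f p)^-1 * partial j f p.
Proof.
move=> df fp; rewrite /partial.
have dl : derivable (@ln R) (f p) 1 by apply: ex_derive; exact: is_derive1_ln.
have := @derive_comp1 (@ln R) f p (ebasis R j) df dl.
by have [_ ->] := is_derive1_ln fp; rewrite /comp => ->.
Qed.

Lemma partial_inv (f : V -> R) p j :
  differentiable f p -> f p != 0 ->
  partial j (fun q => (f q)^-1) p = - ((f p)^-1 * (f p)^-1) * partial j f p.
Proof.
move=> df fp; rewrite /partial deriveV //; last exact: diff_derivable.
by rewrite -invfM -expr2.
Qed.

Lemma partialD (f g : V -> R) p j :
  differentiable f p -> differentiable g p ->
  partial j (f + g) p = partial j f p + partial j g p.
Proof. by move=> df dg; rewrite /partial deriveD //; exact: diff_derivable. Qed.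

Lemma partialM (f g : V -> R) p j :
  differentiable f p -> differentiable g p ->
  partial j (f * g) p = f p * partial j g p + g p * partial j f p.
Proof. by move=> df dg; rewrite /partial deriveM //; exact: diff_derivable. Qed.

Lemma partial_cst (c : R) (j : 'I_N) p : partial j (cst c) p = 0.
Proof. by rewrite /partial derive_cst. Qed.
End Chain.

Section Sm.
Variables (R : realType) (N : nat) (U : set 'rV[R]_N).
Hypothesis oU : open U.
Notation V := 'rV[R]_N.

Definition eqU (f g : V -> R) := forall p, U p -> f p = g p.

Lemma nearU p : U p -> \forall q \near p, U q.
Proof. by move=> Up; apply: open_nbhs_nbhs; split. Qed.

Lemma near_eqU (f g : V -> R) p : eqU f g -> U p -> \forall q \near p, f q = g q.
Proof. by move=> fg Up; near=> q; apply: fg; near: q; exact: nearU.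
Unshelve. all: by end_near. Qed.

Lemma differentiable_eqU (f g : V -> R) p :
  eqU f g -> U p -> differentiable f p -> differentiable g p.
Proof.
move=> fg Up df.
have d0 : differentiable (g - f) p.
  apply: near0_differentiable; near=> q.
  by rewrite !fctE (near (near_eqU fg Up) q) // subrr.
have := differentiableD df d0.
by rewrite (_ : f + (g - f) = g) //; apply/funext => q; rewrite !fctE addrC subrK.
Unshelve. all: by end_near. Qed.

Lemma partial_eqU (f g : V -> R) j : eqU f g -> eqU (partial j f) (partial j g).
Proof.
move=> fg p Up; rewrite /partial; apply: near_eq_derive.
exact: near_eqU.
Qed.

Lemma iter_partial_eqU t (f g : V -> R) :
  eqU f g -> eqU (iter_partial t f) (iter_partial t g).
Proof. by elim: t => [|j t IH] //= fg; apply: partial_eqU; exact: IH. Qed.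

Definition Smk k (f : V -> R) := forall t, (size t <= k)%N ->
  forall p, U p -> differentiable (iter_partial t f) p.

Lemma Smk_eqU k f g : eqU f g -> Smk k f -> Smk k g.
Proof.
move=> fg sf t st p Up.
apply: (differentiable_eqU (iter_partial_eqU t fg)) => //; exact: sf.
Qed.

Lemma iter_partial_rcons t j (f : V -> R) :
  iter_partial (rcons t j) f = iter_partial t (partial j f).
Proof. by rewrite /iter_partial foldr_rcons. Qed.

Lemma Smk_diff k f p : Smk k f -> U p -> differentiable f p.
Proof. by move=> sf Up; exact: (sf [::]). Qed.

Lemma SmkS k f : (forall p, U p -> differentiable f p) ->
  (forall j, Smk k (partial j f)) -> Smk k.+1 f.
Proof.
move=> d0 dj t; case/lastP: t => [|t j] st p Up; first exact: d0.
rewrite iter_partial_rcons; apply: dj => //.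
by move: st; rewrite size_rcons.
Qed.

Lemma Smk_partial k f j : Smk k.+1 f -> Smk k (partial j f).
Proof.
move=> sf t st p Up; rewrite -iter_partial_rcons; apply: sf => //.
by rewrite size_rcons.
Qed.

Lemma Smk_le k f : Smk k.+1 f -> Smk k f.
Proof. by move=> sf t st; apply: sf; exact: leqW. Qed.

Lemma smoothP f : smooth_on U f <-> forall k, Smk k f.
Proof.
split=> [sf k t _ p Up|sf t p Up]; first exact: sf.
exact: (sf (size t)).
Qed.

Lemma Smk_cst k c : Smk k (cst c).
Proof.
elim: k c => [|k IH] c.
  by move=> t; rewrite leqn0 => /nilP -> p _; exact: differentiable_cst.
apply: SmkS => [p _|j]; first exact: differentiable_cst.
rewrite (_ : partial j (cst c) = cst 0); first exact: IH.
by apply/funext => p; rewrite partial_cst.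
Qed.

Lemma SmkD k : forall f g, Smk k f -> Smk k g -> Smk k (f + g).
Proof.
elim: k => [|k IH] f g sf sg.
  move=> t; rewrite leqn0 => /nilP -> p Up /=.
  by apply: differentiableD; [exact: (Smk_diff sf)|exact: (Smk_diff sg)].
apply: SmkS => [p Up|j].
  by apply: differentiableD; [exact: (Smk_diff sf)|exact: (Smk_diff sg)].
apply: (@Smk_eqU _ (partial j f + partial j g)).
  move=> p Up; rewrite partialD //; [exact: (Smk_diff sf)|exact: (Smk_diff sg)].
by apply: IH; apply: Smk_partial.
Qed.

Lemma SmkM k : forall f g, Smk k f -> Smk k g -> Smk k (f * g).
Proof.
elim: k => [|k IH] f g sf sg.
  move=> t; rewrite leqn0 => /nilP -> p Up /=.
  by apply: differentiableM; [exact: (Smk_diff sf)|exact: (Smk_diff sg)].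
apply: SmkS => [p Up|j].
  by apply: differentiableM; [exact: (Smk_diff sf)|exact: (Smk_diff sg)].
apply: (@Smk_eqU _ (f * partial j g + g * partial j f)).
  move=> p Up; rewrite partialM //; [exact: (Smk_diff sf)|exact: (Smk_diff sg)].
apply: SmkD; apply: IH; by [apply: Smk_le|apply: Smk_partial].
Qed.

Lemma Smk_exp k : forall f, Smk k f -> Smk k (fun q => expR (f q)).
Proof.
elim: k => [|k IH] f sf.
  move=> t; rewrite leqn0 => /nilP -> p Up /=.
  by apply: differentiable_exp; exact: (Smk_diff sf).
apply: SmkS => [p Up|j]; first by apply: differentiable_exp; exact: (Smk_diff sf).
apply: (@Smk_eqU _ ((fun q => expR (f q)) * partial j f)).
  by move=> p Up; rewrite partial_exp //; exact: (Smk_diff sf).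
apply: SmkM; [apply: IH; exact: Smk_le|exact: Smk_partial].
Qed.

Lemma Smk_inv k : forall f, (forall p, U p -> f p != 0) -> Smk k f ->
  Smk k (fun q => (f q)^-1).
Proof.
elim: k => [|k IH] f f0 sf.
  move=> t; rewrite leqn0 => /nilP -> p Up /=.
  by apply: differentiableV; [exact: (Smk_diff sf)|exact: f0].
apply: SmkS => [p Up|j].
  by apply: differentiableV; [exact: (Smk_diff sf)|exact: f0].
apply: (@Smk_eqU _ ((cst (-1) * ((fun q => (f q)^-1) * (fun q => (f q)^-1)))
   * partial j f)).
  move=> p Up; rewrite partial_inv //; [|exact: (Smk_diff sf)|exact: f0].
  by rewrite !fctE mulN1r.
have si : Smk k (fun q => (f q)^-1) by apply: IH => //; exact: Smk_le.
apply: SmkM; last exact: Smk_partial.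
apply: SmkM; first exact: Smk_cst.
exact: SmkM.
Qed.

Lemma Smk_ln k f : (forall p, U p -> 0 < f p) -> Smk k f ->
  Smk k (fun q => ln (f q)).
Proof.
case: k => [|k] f0 sf.
  move=> t; rewrite leqn0 => /nilP -> p Up /=.
  by apply: differentiable_ln; [exact: (Smk_diff sf)|exact: f0].
apply: SmkS => [p Up|j].
  by apply: differentiable_ln; [exact: (Smk_diff sf)|exact: f0].
apply: (@Smk_eqU _ ((fun q => (f q)^-1) * partial j f)).
  by move=> p Up; rewrite partial_ln //; [exact: (Smk_diff sf)|exact: f0].
apply: SmkM; last exact: Smk_partial.
apply: Smk_inv; last exact: Smk_le.
by move=> p Up; rewrite gt_eqF // f0.
Qed.
End Sm.

Section Indep.
Variables (R : realType) (N : nat).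
Lemma partial_indep (f : 'rV[R]_N -> R) j p :
  (forall h : R, f (h *: ebasis R j + p) = f p) -> partial j f p = 0.
Proof.
move=> hf; rewrite /partial /derive.
rewrite (_ : (fun h : R => _) = cst 0); first exact: lim_cst.
by apply/funext => h /=; rewrite hf subrr scaler0.
Qed.

Lemma partial_scale (f : 'rV[R]_N -> R) (c : R) j p : differentiable f p ->
  partial j (fun q => c * f q) p = c * partial j f p.
Proof.
move=> df; rewrite /partial (_ : (fun q => c * f q) = c *: f) //.
by rewrite deriveZ //; exact: diff_derivable.
Qed.

Lemma sum_if1 (f : 'I_N -> R) c x :
  \sum_(l < N) f l * (if l == c then x else 0) = f c * x.
Proof.
rewrite (bigD1 c) //= eqxx big1 ?addr0 // => l /negbTE ->; by rewrite mulr0.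
Qed.

Lemma sum_if2 (f : 'I_N -> R) c d x z : c != d ->
  \sum_(l < N) f l * (if l == c then x else if l == d then z else 0) =
  f c * x + f d * z.
Proof.
move=> cd; rewrite (bigD1 c) //= eqxx (bigD1 d) //=; last by rewrite eq_sym.
rewrite [d == c]eq_sym (negbTE cd) eqxx.
rewrite big1 ?addr0 // => l /andP [/negbTE -> /negbTE ->]; by rewrite mulr0.
Qed.

Lemma koszul (Gam : 'I_N -> 'I_N -> 'I_N -> 'rV[R]_N -> R)
  (g : 'I_N -> 'I_N -> 'rV[R]_N -> R) (om : 'I_N -> 'rV[R]_N -> R) p :
  (forall l i j, Gam l i j p = Gam l j i p) ->
  (forall i j, g i j p = g j i p) ->
  (forall k i j, nabla2 Gam g k i j p = - 2 * om k p * g i j p) ->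
  forall j k i, \sum_(l < N) Gam l k i p * g l j p =
   ((partial k (g i j) p + 2 * om k p * g i j p)
  + (partial i (g k j) p + 2 * om i p * g k j p)
  - (partial j (g k i) p + 2 * om j p * g k i p)) / 2.
Proof.
move=> sG sg W j k i.
pose Lo := fun (j0 k0 i0 : 'I_N) => \sum_(l < N) Gam l k0 i0 p * g l j0 p.
have HA k0 i0 j0 : partial k0 (g i0 j0) p + 2 * om k0 p * g i0 j0 p = Lo j0 k0 i0 + Lo i0 k0 j0.
  have Wk := W k0 i0 j0; rewrite /nabla2 in Wk.
  have -> : partial k0 (g i0 j0) p = - 2 * om k0 p * g i0 j0 p +
     \sum_(l < N) (Gam l k0 i0 p * g l j0 p + Gam l k0 j0 p * g i0 l p).
    by rewrite -Wk subrK.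
  rewrite big_split /= /Lo.
  have -> : \sum_(l < N) Gam l k0 j0 p * g i0 l p = \sum_(l < N) Gam l k0 j0 p * g l i0 p.
    by apply: eq_bigr => l _; rewrite sg.
  ring.
rewrite HA HA HA /Lo.
have e1 : \sum_(l < N) Gam l i k p * g l j p = \sum_(l < N) Gam l k i p * g l j p.
  by apply: eq_bigr => l _; rewrite sG.
have e2 : \sum_(l < N) Gam l j k p * g l i p = \sum_(l < N) Gam l k j p * g l i p.
  by apply: eq_bigr => l _; rewrite sG.
have e3 : \sum_(l < N) Gam l j i p * g l k p = \sum_(l < N) Gam l i j p * g l k p.
  by apply: eq_bigr => l _; rewrite sG.
rewrite e1 e2 e3.
set A := \sum_(l < N) Gam l k i p * g l j p.
set B := \sum_(l < N) Gam l k j p * g l i p.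
set C := \sum_(l < N) Gam l i j p * g l k p.
field; by [].
Qed.
End Indep.

Section Const.
Variables (R : realType) (N : nat) (U : set 'rV[R]_N).
Hypothesis oU : open U.
Notation V := 'rV[R]_N.

Lemma Dzero (f : V -> R) z w : differentiable f z ->
  (forall j, partial j f z = 0) -> 'D_w f z = 0.
Proof.
move=> df h0; rewrite deriveE //.
rewrite [w]row_sum_delta linear_sum big1 // => j _.
rewrite linearZ /= -deriveE //.
by have := h0 j; rewrite /partial /ebasis => ->; rewrite scaler0.
Qed.

Lemma line_derive (f : V -> R) p w t :
  let g := fun s : R => f (p + s *: w) in
  'D_1 g t = 'D_w f (p + t *: w) /\
  (derivable f (p + t *: w) w -> derivable g t 1).
Proof.
move=> g.
have E : (fun h : R => h^-1 *: ((g \o shift t) (h *: 1) - g t)) =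
         (fun h : R => h^-1 *: ((f \o shift (p + t *: w)) (h *: w) - f (p + t *: w))).
  apply/funext => h; rewrite /g /=.
  congr (_ *: (f _ - _)).
  by rewrite [h *: 1]mulr1 scalerDl addrCA addrC.
split; first by rewrite /derive E.
by rewrite /derivable E.
Qed.

Lemma loc_const (f : V -> R) p : U p ->
  (forall q, U q -> differentiable f q) ->
  (forall j q, U q -> partial j f q = 0) ->
  \forall q \near p, f q = f p.
Proof.
move=> Up df d0.
have /nbhs_ballP [r r0 rU] : nbhs p U by apply: open_nbhs_nbhs; split.
apply/nbhs_ballP; exists r => // q pq.
pose w := q - p.
pose g := fun s : R => f (p + s *: w).
have inU (s : R) : 0 <= s <= 1 -> U (p + s *: w).
  move=> /andP [s0 s1]; apply: rU.
  rewrite -ball_normE /= opprD addrA subrr add0r normrN normrZ.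
  rewrite ger0_norm //.
  apply: (le_lt_trans (y := `|w|)).
    by rewrite -[X in _ <= X]mul1r ler_wpM2r.
  by move: pq; rewrite -ball_normE /= /w -normrN opprB.
have gd (s : R) : 0 <= s <= 1 -> is_derive s 1 g 0.
  move=> hs; have [D1 Dd] := line_derive f p w s.
  have dfz := df _ (inU s hs).
  apply: DeriveDef; first by apply: Dd; exact: diff_derivable.
  by rewrite D1; apply: Dzero => // j; apply: d0; exact: inU.
have := @MVT _ g (fun _ => 0) 0 1 ltr01.
case.
- move=> s; rewrite in_itv /= => /andP [s0 s1]; apply: gd.
  by rewrite !ltW.
- apply: continuous_in_subspaceT => s; rewrite inE /= in_itv /= => hs.
  have := gd s hs => -[/derivable1_diffP + _].
  exact: differentiable_continuous.
move=> s _; rewrite mul0r => /eqP; rewrite subr_eq0 => /eqP.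
by rewrite /g scale1r scale0r addr0 /w addrC subrK.
Qed.

Lemma const_conn (f : V -> R) : connected U ->
  (forall q, U q -> differentiable f q) ->
  (forall j q, U q -> partial j f q = 0) ->
  forall p q, U p -> U q -> f q = f p.
Proof.
move=> cU df d0 p q Up Uq.
have loc z : U z -> \forall w \near z, f w = f z.
  by move=> Uz; apply: loc_const.
pose c := f p.
pose B := [set z | U z /\ f z = c].
have BU : B = U.
  apply: cU.
  - by exists p.
  - exists (interior [set w | f w = c]); first exact: open_interior.
    apply/seteqP; split => z.
      move=> [Uz fz]; split => //; rewrite /interior /=.
      by have := loc z Uz; rewrite fz.
    by move=> [Uz /nbhs_singleton fz]; split.
  - exists (~` interior [set w | f w != c]).
      by apply: open_closedC; exact: open_interior.
    apply/seteqP; split => z.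
      move=> [Uz fz]; split => //= /nbhs_singleton /=.
      by rewrite fz eqxx.
    move=> [Uz nz]; split => //.
    have [//|fzc] := eqVneq (f z) c.
    exfalso; apply: nz; rewrite /interior /=.
    by have := loc z Uz; apply: filterS => w /= ->.
have : B q by rewrite BU.
by case.
Qed.
End Const.

Section Extra.
Variables (R : realType) (N : nat).
Lemma diff_scale (f : 'rV[R]_N -> R) (c : R) p : differentiable f p ->
  differentiable (fun q => c * f q) p.
Proof.
move=> df; rewrite (_ : (fun q => c * f q) = c *: f) //.
exact: differentiableZ.
Qed.
End Extra.


Section Model.
Variables (R : realType) (n : nat) (F : R -> R -> R) (a : R -> R).
Variables (U : set 'rV[R]_(n.+2)) (Gam : 'I_(n.+2) -> 'I_(n.+2) -> 'I_(n.+2) -> 'rV[R]_(n.+2) -> R).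
Hypothesis n2 : (2 <= n)%N.
Hypothesis oU : open U.
Hypothesis sF : smooth_on U (Fhat F).
Hypothesis sa : smooth_on U (fun p => a (p 0 (u_idx n))).
Hypothesis hW : weyl_on U Gam (gmodel F a) (omodel F).
Notation V := 'rV[R]_(n.+2).
Notation v := (v_idx n). Notation u := (u_idx n). Notation y := (xn_idx n).
Notation Fh := (Fhat F).
Definition e1 : 'I_(n.+2) := inord 1.

Lemma valy : nat_of_ord y = n. Proof. by rewrite /xn_idx inordK. Qed.
Lemma valu : nat_of_ord u = n.+1. Proof. by []. Qed.
Lemma valv : nat_of_ord v = 0%N. Proof. by []. Qed.
Lemma vale1 : nat_of_ord e1 = 1%N. Proof. by rewrite /e1 inordK. Qed.

Lemma ordE (i j : 'I_(n.+2)) : (i == j) = (nat_of_ord i == nat_of_ord j)%N.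
Proof. by []. Qed.

Ltac brute := repeat (let H := fresh "H" in case: ifP => H; move: H);
  rewrite ?ordE ?valy ?valu ?valv ?vale1 /=; move=> *; try (exfalso; lia); try done.

Definition Hf (p : V) := a (p 0 u) * \sum_(k < n.+2 | (0 < k < n)%N) (p 0 k) ^+ 2.

Lemma gsym (i j : 'I_(n.+2)) (p : V) : gmodel F a i j p = gmodel F a j i p.
Proof. rewrite /gmodel; brute. Qed.

Lemma gfun (i j : 'I_(n.+2)) : gmodel F a i j =
  if (i == j) && (i == y) then (fun p => expR (-2 * Fh p))
  else if (i == j) && (i == u) then Hf
  else cst (if ((i == v) && (j == u)) || ((i == u) && (j == v)) || ((i == j) && (0 < i < n)%N)
            then 1 else 0).
Proof. apply/funext => p; rewrite /gmodel /Hf; brute. Qed.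


Lemma gcol_flat (l j : 'I_(n.+2)) (p : V) : (0 < j < n)%N ->
  gmodel F a l j p = if l == j then 1 else 0.
Proof. move=> jf; rewrite /gmodel; brute. Qed.
Lemma gcol_v (l : 'I_(n.+2)) (p : V) : gmodel F a l v p = if l == u then 1 else 0.
Proof. rewrite /gmodel; brute. Qed.
Lemma gcol_y (l : 'I_(n.+2)) (p : V) :
  gmodel F a l y p = if l == y then expR (-2 * Fh p) else 0.
Proof. rewrite /gmodel; brute. Qed.
Lemma gcol_u (l : 'I_(n.+2)) (p : V) :
  gmodel F a l u p = if l == v then 1 else if l == u then Hf p else 0.
Proof. rewrite /gmodel /Hf; brute. Qed.

Lemma kinds (b : 'I_(n.+2)) : [\/ b = v, b = u, b = y | (0 < b < n)%N].
Proof.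
have [bv|bv] := eqVneq b v; first by constructor 1.
have [bu|bu] := eqVneq b u; first by constructor 2.
have [by_|by_] := eqVneq b y; first by constructor 3.
constructor 4; move: bv bu by_; rewrite !ordE valy valu valv.
have := ltn_ord b; lia.
Qed.

Lemma e1flat : (0 < e1 < n)%N.
Proof. rewrite vale1; lia. Qed.

Lemma dFE (k : 'I_(n.+2)) (p : V) : partial k Fh p =
  if k == y then partial y Fh p else if k == u then partial u Fh p else 0.
Proof.
case: ifP => [/eqP->//|ky]; case: ifP => [/eqP->//|ku].
apply: partial_indep => h; rewrite /Fhat !mxE /=.
by rewrite [y == k]eq_sym [u == k]eq_sym ky ku !mulr0 !add0r.
Qed.

Lemma dH0 (k : 'I_(n.+2)) (p : V) : (k == v) || (k == y) -> partial k Hf p = 0.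
Proof.
move=> hk; apply: partial_indep => h; rewrite /Hf !mxE /=.
have -> : (u == k) = false.
  by move: hk; case/orP => /eqP ->; apply/eqP => /(congr1 val); rewrite /= ?valy; lia.
rewrite mulr0 add0r; congr (_ * _); apply: eq_bigr => i hi.
rewrite !mxE /=.
have -> : (i == k) = false.
  by move: hk hi; case/orP => /eqP -> hi; apply/eqP => /(congr1 val); rewrite /= ?valy; lia.
by rewrite mulr0 add0r.
Qed.

Lemma dFdiff p : U p -> differentiable Fh p.
Proof. by move=> Up; exact: (sF [::]). Qed.

Lemma Dg (k i j : 'I_(n.+2)) (p : V) : U p ->
  partial k (gmodel F a i j) p =
  if (i == j) && (i == y) then -2 * partial k Fh p * expR (-2 * Fh p)
  else if (i == j) && (i == u) then partial k Hf p else 0.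
Proof.
move=> Up; rewrite gfun; case: ifP => _.
  have d1 : differentiable (fun q => -2 * Fh q) p.
    rewrite (_ : (fun q => -2 * Fh q) = (-2) *: Fh) //.
    by apply: differentiableZ; exact: dFdiff.
  rewrite (partial_exp (f := fun q => -2 * Fh q)) // partial_scale; last exact: dFdiff.
  by rewrite mulrC.
case: ifP => _ //; exact: partial_cst.
Qed.


Lemma Kz p : U p -> forall j k i,
  \sum_(l < n.+2) Gam l k i p * gmodel F a l j p =
   ((partial k (gmodel F a i j) p + 2 * omodel F k p * gmodel F a i j p)
  + (partial i (gmodel F a k j) p + 2 * omodel F i p * gmodel F a k j p)
  - (partial j (gmodel F a k i) p + 2 * omodel F j p * gmodel F a k i p)) / 2.
Proof.
move=> Up; apply: koszul; first exact: hW.1.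
  by move=> i j; exact: gsym.
exact: hW.2.
Qed.


Lemma ne_nat (i j : 'I_(n.+2)) : (nat_of_ord i != nat_of_ord j) -> (i == j) = false.
Proof. by move=> h; apply/negbTE. Qed.

Lemma vu : (v == u) = false. Proof. by apply: ne_nat; rewrite valu valv. Qed.
Lemma uv : (u == v) = false. Proof. by apply: ne_nat; rewrite valu valv. Qed.
Lemma vy : (v == y) = false. Proof. apply: ne_nat; rewrite valy valv; lia. Qed.
Lemma yv : (y == v) = false. Proof. apply: ne_nat; rewrite valy valv; lia. Qed.
Lemma uy : (u == y) = false. Proof. apply: ne_nat; rewrite valy valu; lia. Qed.
Lemma yu : (y == u) = false. Proof. apply: ne_nat; rewrite valy valu; lia. Qed.
Lemma e1v : (e1 == v) = false. Proof. apply: ne_nat; rewrite vale1 valv; lia. Qed.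
Lemma ve1 : (v == e1) = false. Proof. apply: ne_nat; rewrite vale1 valv; lia. Qed.
Lemma e1u : (e1 == u) = false. Proof. apply: ne_nat; rewrite vale1 valu; lia. Qed.
Lemma ue1 : (u == e1) = false. Proof. apply: ne_nat; rewrite vale1 valu; lia. Qed.
Lemma e1y : (e1 == y) = false. Proof. apply: ne_nat; rewrite vale1 valy; lia. Qed.
Lemma ye1 : (y == e1) = false. Proof. apply: ne_nat; rewrite vale1 valy; lia. Qed.
Lemma fv : (0 < v < n)%N = false. Proof. by rewrite valv. Qed.
Lemma fu : (0 < u < n)%N = false. Proof. rewrite valu; lia. Qed.
Lemma fy : (0 < y < n)%N = false. Proof. rewrite valy; lia. Qed.
Lemma fe1 : (0 < e1 < n)%N = true. Proof. rewrite vale1; lia. Qed.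
Lemma nv : (nat_of_ord v == n) = false. Proof. rewrite valv; lia. Qed.
Lemma nu : (nat_of_ord u == n) = false. Proof. rewrite valu; lia. Qed.
Lemma ny : (nat_of_ord y == n) = true. Proof. rewrite valy; lia. Qed.
Lemma ne1 : (nat_of_ord e1 == n) = false. Proof. rewrite vale1; lia. Qed.

Definition isimp := (vu, uv, vy, yv, uy, yu, e1v, ve1, e1u, ue1, e1y, ye1,
  fv, fu, fy, fe1, nv, nu, ny, ne1, eqxx).

Lemma flat_simp (x : 'I_(n.+2)) : (0 < x < n)%N ->
  ((x == v) = false) * ((v == x) = false) * ((x == u) = false) * ((u == x) = false)
  * ((x == y) = false) * ((y == x) = false) * ((0 < x < n)%N = true)
  * ((nat_of_ord x == n) = false).
Proof.
move=> hx; have := ltn_ord x.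
by do !split; (apply: ne_nat || idtac); rewrite ?valv ?valu ?valy; lia.
Qed.

Lemma GA1 p q : U p -> Gam e1 q e1 p = if q == u then partial u Fh p else 0.
Proof.
move=> Up; have := Kz Up e1 q e1.
rewrite (eq_bigr (fun l => Gam l q e1 p * (if l == e1 then 1 else 0))); last first.
  by move=> l _; rewrite gcol_flat // e1flat.
rewrite sum_if1 mulr1 => ->.
rewrite !Dg // /omodel /gmodel.
case: (kinds q) => [->|->|->|qf]; rewrite ?isimp /=.
all: try rewrite ?(flat_simp qf) /=.
all: rewrite ?andbF ?andFb ?andbT ?andTb ?orbF ?orFb /=.
all: by rewrite ?mulr0 ?mul0r; try field.
Qed.

Lemma dF0 (k : 'I_(n.+2)) (p : V) : (k == y) = false -> (k == u) = false ->
  partial k Fh p = 0.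
Proof. by move=> h1 h2; rewrite dFE h1 h2. Qed.
Lemma dFv p : partial v Fh p = 0. Proof. by rewrite dF0 ?isimp. Qed.
Lemma dFe1 p : partial e1 Fh p = 0. Proof. by rewrite dF0 ?isimp. Qed.
Lemma dFx (x : 'I_(n.+2)) p : (0 < x < n)%N -> partial x Fh p = 0.
Proof. by move=> hx; rewrite dF0 ?(flat_simp hx). Qed.
Lemma dHv p : partial v Hf p = 0. Proof. by rewrite dH0 ?isimp. Qed.
Lemma dHy p : partial y Hf p = 0. Proof. by rewrite dH0 ?isimp ?orbT. Qed.

Ltac simpall := rewrite ?isimp ?dFv ?dFe1 ?dHv ?dHy /=;
  rewrite ?andbF ?andFb ?andbT ?andTb ?orbF ?orFb ?orbT ?orTb /=.

Lemma GA2 p m : U p -> Gam e1 m v p = 0.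
Proof.
move=> Up; have := Kz Up e1 m v.
rewrite (eq_bigr (fun l => Gam l m v p * (if l == e1 then 1 else 0))); last first.
  by move=> l _; rewrite gcol_flat // e1flat.
rewrite sum_if1 mulr1 => ->.
rewrite !Dg // /omodel /gmodel.
case: (kinds m) => [->|->|->|mf]; simpall.
all: try rewrite ?(flat_simp mf) ?(dFx _ mf) /=; simpall.
all: by rewrite ?mulr0 ?mul0r; try field.
Qed.

Lemma GU1 p m : U p -> Gam u m u p = if m == u then 2 * partial u Fh p else 0.
Proof.
move=> Up; have := Kz Up v m u.
rewrite (eq_bigr (fun l => Gam l m u p * (if l == u then 1 else 0))); last first.
  by move=> l _; rewrite gcol_v.
rewrite sum_if1 mulr1 => ->.
rewrite !Dg // /omodel /gmodel.
case: (kinds m) => [->|->|->|mf]; simpall.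
all: try rewrite ?(flat_simp mf) ?(dFx _ mf) /=; simpall.
all: by rewrite ?mulr0 ?mul0r; try field.
Qed.

Lemma GYu p m : U p -> Gam u m y p = 0.
Proof.
move=> Up; have := Kz Up v m y.
rewrite (eq_bigr (fun l => Gam l m y p * (if l == u then 1 else 0))); last first.
  by move=> l _; rewrite gcol_v.
rewrite sum_if1 mulr1 => ->.
rewrite !Dg // /omodel /gmodel.
case: (kinds m) => [->|->|->|mf]; simpall.
all: try rewrite ?(flat_simp mf) ?(dFx _ mf) /=; simpall.
all: by rewrite ?mulr0 ?mul0r; try field.
Qed.

Lemma expN2F_neq0 (p : V) : expR (-2 * Fh p) != 0.
Proof. by rewrite gt_eqF // expR_gt0. Qed.

Lemma GY p q m : U p -> Gam q m y p = if (q == y) && (m == y) then - partial y Fh p else 0.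
Proof.
move=> Up; case: (kinds q) => [->|->|->|qf].
{ have := Kz Up u m y.
  rewrite (eq_bigr (fun l => Gam l m y p * (if l == v then 1 else if l == u then Hf p else 0))); last first.
    by move=> l _; rewrite gcol_u.
  rewrite sum_if2; last by rewrite vu.
  rewrite GYu // mul0r addr0 mulr1 => ->.
  rewrite !Dg // /omodel /gmodel.
  case: (kinds m) => [->|->|->|mf]; simpall.
  all: try rewrite ?(flat_simp mf) ?(dFx _ mf) /=; simpall.
  all: by rewrite ?mulr0 ?mul0r; try field. }
{ by rewrite GYu // isimp. }
{ have := Kz Up y m y.
  rewrite (eq_bigr (fun l => Gam l m y p * (if l == y then expR (-2 * Fh p) else 0))); last first.
    by move=> l _; rewrite gcol_y.
  rewrite sum_if1 => H.
  apply: (mulIf (expN2F_neq0 p)); rewrite {}H.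
  rewrite !Dg // /omodel /gmodel.
  case: (kinds m) => [->|->|->|mf]; simpall.
  all: try rewrite ?(flat_simp mf) ?(dFx _ mf) /=; simpall.
  all: by rewrite ?mulr0 ?mul0r; try field. }
{ have := Kz Up q m y.
  rewrite (eq_bigr (fun l => Gam l m y p * (if l == q then 1 else 0))); last first.
    by move=> l _; rewrite gcol_flat.
  rewrite sum_if1 mulr1 => ->.
  rewrite !Dg // /omodel /gmodel.
  case: (kinds m) => [->|->|->|mf]; rewrite ?(flat_simp qf) ?(dFx _ qf); simpall.
  all: try rewrite ?(flat_simp mf) ?(dFx _ mf) /=; simpall.
  all: by rewrite ?mulr0 ?mul0r; try field. }
Qed.
Lemma GA3 p b m : U p -> b != e1 -> b != v -> Gam b m e1 p = 0.
Proof.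
move=> Up be bv; case: (kinds b) => [bE|->|->|bf].
{ by rewrite bE eqxx in bv. }
{ have := Kz Up v m e1.
  rewrite (eq_bigr (fun l => Gam l m e1 p * (if l == u then 1 else 0))); last first.
    by move=> l _; rewrite gcol_v.
  rewrite sum_if1 mulr1 => ->.
  rewrite !Dg // /omodel /gmodel.
  case: (kinds m) => [->|->|->|mf]; simpall.
  all: try rewrite ?(flat_simp mf) ?(dFx _ mf) /=; simpall.
  all: by rewrite ?mulr0 ?mul0r; try field. }
{ have := Kz Up y m e1.
  rewrite (eq_bigr (fun l => Gam l m e1 p * (if l == y then expR (-2 * Fh p) else 0))); last first.
    by move=> l _; rewrite gcol_y.
  rewrite sum_if1 => H.
  apply: (mulIf (expN2F_neq0 p)); rewrite {}H.
  rewrite !Dg // /omodel /gmodel.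
  case: (kinds m) => [->|->|->|mf]; simpall.
  all: try rewrite ?(flat_simp mf) ?(dFx _ mf) /=; simpall.
  all: by rewrite ?mulr0 ?mul0r; try field. }
{ have := Kz Up b m e1.
  rewrite (eq_bigr (fun l => Gam l m e1 p * (if l == b then 1 else 0))); last first.
    by move=> l _; rewrite gcol_flat.
  rewrite sum_if1 mulr1 => ->.
  rewrite !Dg // /omodel /gmodel.
  have eb : (e1 == b) = false by rewrite eq_sym; exact/negbTE.
  case: (kinds m) => [->|->|->|mf]; rewrite ?(flat_simp bf) ?(dFx _ bf) ?eb ?(negbTE be); simpall.
  all: try rewrite ?(flat_simp mf) ?(dFx _ mf) /=; simpall.
  all: by rewrite ?mulr0 ?mul0r; try field. }
Qed.

Notation Fu := (partial u Fh).
Notation Q := (partial y (partial u Fh)).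

Lemma pU (f g : V -> R) k p : U p -> (forall q, U q -> f q = g q) ->
  partial k f p = partial k g p.
Proof. by move=> Up fg; exact: (partial_eqU oU k fg Up). Qed.

Lemma pU0 (f : V -> R) k p : U p -> (forall q, U q -> f q = 0) -> partial k f p = 0.
Proof. by move=> Up f0; rewrite (@pU f (cst 0)) // partial_cst. Qed.

Lemma symG p l i j : U p -> Gam l i j p = Gam l j i p.
Proof. by move=> Up; exact: hW.1. Qed.

Lemma Gy0 p q m : U p -> (m == y) = false -> Gam q m y p = 0.
Proof. by move=> Up my; rewrite GY // my andbF. Qed.

Lemma Gy0' p q m : U p -> (m == y) = false -> Gam q y m p = 0.
Proof. by move=> Up my; rewrite symG // Gy0. Qed.

Lemma Ge1y p m : U p -> Gam e1 y m p = 0.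
Proof. by move=> Up; rewrite symG // GY // e1y. Qed.

Lemma CurvQ p : U p -> Curv Gam e1 y u e1 p = Q p.
Proof.
move=> Up; rewrite /Curv.
rewrite (@pU (Gam e1 u e1) Fu) //; last by move=> q Uq; rewrite GA1 // eqxx.
rewrite (@pU0 (Gam e1 y e1)) //; last by move=> q Uq; rewrite Ge1y.
rewrite big1 ?addr0 ?subr0 // => r _.
by rewrite Ge1y // (Gy0' _ Up e1y) !mul0r mulr0 subrr.
Qed.

Lemma C1 p q : U p -> Curv Gam q y u e1 p = partial y (Gam q u e1) p.
Proof.
move=> Up; rewrite /Curv.
rewrite (@pU0 (Gam q y e1)) //; last by move=> z Uz; rewrite (Gy0' _ Uz e1y).
rewrite big1 ?addr0 ?subr0 // => r _.
rewrite (Gy0' _ Up e1y) mulr0 subr0.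
rewrite symG // GY //; case: ifP => [/andP [_ /eqP ->]|_]; last by rewrite mul0r.
by rewrite GA3 ?mulr0 // ?ye1 ?yv.
Qed.

Lemma C3 p q : U p -> Curv Gam e1 y q e1 p = if q == u then Q p else 0.
Proof.
move=> Up; rewrite /Curv.
rewrite (@pU0 (Gam e1 y e1)) //; last by move=> z Uz; rewrite Ge1y.
rewrite big1 ?addr0 ?subr0 //; last first.
  by move=> r _; rewrite Ge1y // (Gy0' _ Up e1y) mul0r mulr0 subrr.
case: ifP => [/eqP ->|qu].
  by apply: pU => // z Uz; rewrite GA1 // eqxx.
by apply: pU0 => // z Uz; rewrite GA1 // qu.
Qed.

Lemma C4 p q : U p -> Curv Gam e1 y u q p = partial y (Gam e1 u q) p.
Proof.
move=> Up; rewrite /Curv.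
rewrite (@pU0 (Gam e1 y q)) //; last by move=> z Uz; rewrite Ge1y.
rewrite big1 ?addr0 ?subr0 // => r _.
rewrite Ge1y // mul0r sub0r.
rewrite [Gam r y q p]symG // GY //; case: ifP => [/andP [/eqP -> _]|_].
  by rewrite Gy0 ?uy // mul0r oppr0.
by rewrite mulr0 oppr0.
Qed.

Lemma nablaC p m : U p ->
  nablaCurv Gam m e1 y u e1 p =
  partial m Q p + (if m == y then partial y Fh p else 0) * Q p
  - (if m == u then 2 * Fu p else 0) * Q p.
Proof.
move=> Up; rewrite /nablaCurv.
rewrite (@pU _ Q) //; last by move=> z Uz; rewrite CurvQ.
rewrite !big_split /= !sumrN.
have T1 : \sum_(q < n.+2) Gam e1 m q p * Curv Gam q y u e1 p =
    (if m == u then Fu p else 0) * Q p.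
  rewrite (bigD1 e1) //= C1 // (@pU (Gam e1 u e1) Fu) //; last first.
    by move=> z Uz; rewrite GA1 // eqxx.
  rewrite GA1 // big1 ?addr0 // => q qe.
  rewrite C1 //; have [->|qv] := eqVneq q v; first by rewrite GA2 // mul0r.
  by rewrite (@pU0 (Gam q u e1)) ?mulr0 // => z Uz; rewrite GA3.
have T2 : \sum_(q < n.+2) Gam q m y p * Curv Gam e1 q u e1 p =
    (if m == y then - partial y Fh p else 0) * Q p.
  rewrite (bigD1 y) //= big1 ?addr0.
    by rewrite GY // eqxx /= CurvQ.
  by move=> q qy; rewrite GY // (negbTE qy) mul0r.
have T3 : \sum_(q < n.+2) Gam q m u p * Curv Gam e1 y q e1 p =
    (if m == u then 2 * Fu p else 0) * Q p.
  under eq_bigr do rewrite C3 //.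
  by rewrite sum_if1 GU1.
have T4 : \sum_(q < n.+2) Gam q m e1 p * Curv Gam e1 y u q p =
    (if m == u then Fu p else 0) * Q p.
  rewrite (bigD1 e1) //= C4 // (@pU (Gam e1 u e1) Fu) //; last first.
    by move=> z Uz; rewrite GA1 // eqxx.
  rewrite GA1 // big1 ?addr0 // => q qe.
  rewrite C4 //; have [->|qv] := eqVneq q v.
    by rewrite (@pU0 (Gam e1 u v)) ?mulr0 // => z Uz; rewrite GA2.
  by rewrite GA3 // mul0r.
rewrite T1 T2 T3 T4.
case: (m == u); case: (m == y); rewrite ?mul0r ?oppr0 ?subr0 ?addr0 ?sub0r ?add0r. all: move: (partial m Q p) (Q p) (Fu p) (partial y Fh p) => A B C D; ring.
Qed.

Lemma Hdiff p : U p -> differentiable Hf p.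
Proof.
move=> Up.
have -> : Hf = (fun q : V => a (q 0 u)) *
   \sum_(k < n.+2) (fun q : V => if (0 < k < n)%N then q 0 k * q 0 k else 0).
  apply/funext => q; rewrite /Hf fct_sumE /= big_mkcond /=.
  congr (_ * _); apply: eq_bigr => k _; by case: ifP.
apply: differentiableM; first exact: (sa [::]).
apply: differentiable_sum => k; case: (0 < k < n)%N; last exact: differentiable_cst.
rewrite (_ : (fun q : V => q 0 k * q 0 k) = (fun q : V => q 0 k) * (fun q : V => q 0 k)) //.
by apply: differentiableM; exact: differentiable_coord.
Qed.

Lemma gdiff i j p : U p -> differentiable (gmodel F a i j) p.
Proof.
move=> Up; rewrite gfun; case: ifP => _.
  by apply: differentiable_exp; apply: diff_scale; exact: dFdiff.
case: ifP => _; first exact: Hdiff.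
exact: differentiable_cst.
Qed.

Lemma conf1 (psi : V -> R) p k i j : U p -> differentiable psi p -> psi p != 0 ->
  nabla2 Gam (conf psi (gmodel F a)) k i j p =
  -2 * (omodel F k p - partial k psi p / (2 * psi p)) * conf psi (gmodel F a) i j p.
Proof.
move=> Up dpsi psi0; rewrite /nabla2 /conf.
rewrite (_ : (fun q => psi q * gmodel F a i j q) = psi * gmodel F a i j) //.
rewrite partialM //; last exact: gdiff.
have W := hW.2 p Up k i j; rewrite /nabla2 in W.
set S := \sum_(l < n.+2) _ in W.
have -> : \sum_(l < n.+2) (Gam l k i p * (psi p * gmodel F a l j p) +
       Gam l k j p * (psi p * gmodel F a i l p)) = psi p * S.
  by rewrite /S mulr_sumr; apply: eq_bigr => l _; ring.
have -> : S = partial k (gmodel F a i j) p + 2 * omodel F k p * gmodel F a i j p.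
  by rewrite -[S]opprK -[- S](addKr (partial k (gmodel F a i j) p)) W; ring.
by field.
Qed.


Hypothesis hQ : forall p, U p -> Q p != 0.

Definition phi (p : V) := expR (2/3 * Fh p + 1/3 * ln (Q p * Q p)).

Lemma sQ k : Smk U k Q.
Proof.
have := (smoothP _ Fh).1 sF k.+2.
by move=> /(Smk_partial u) /(Smk_partial y).
Qed.

Lemma QQpos p : U p -> 0 < Q p * Q p.
Proof.
move=> Up; rewrite lt_def mulf_neq0 ?hQ //=.
by rewrite -expr2 sqr_ge0.
Qed.

Lemma phi_pos p : 0 < phi p.
Proof. exact: expR_gt0. Qed.

Lemma phi_smooth : smooth_on U phi.
Proof.
apply/smoothP => k.
apply: (@Smk_eqU _ _ _ oU k (fun p => expR ((cst (2/3) * Fh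
   + cst (1/3) * (fun q => ln ((Q * Q) q))) p))).
  by move=> p _; rewrite /phi.
apply: (Smk_exp oU); apply: (SmkD oU).
  apply: (SmkM oU); first exact: Smk_cst.
  exact: (smoothP _ Fh).1 sF k.
apply: (SmkM oU); first exact: Smk_cst.
apply: (Smk_ln oU); first by move=> p Up; exact: QQpos.
by apply: (SmkM oU); exact: sQ.
Qed.

Lemma dQdiff p : U p -> differentiable Q p.
Proof. by move=> Up; exact: (Smk_diff (sQ (k:=0)) Up). Qed.

Lemma dphi p k : U p ->
  partial k phi p = phi p * (2/3 * partial k Fh p + 2/3 * partial k Q p / Q p).
Proof.
move=> Up.
have dF := dFdiff Up; have dQ := dQdiff Up.
have dQQ : differentiable (Q * Q) p := differentiableM dQ dQ.
have dl : differentiable (fun q => ln ((Q * Q) q)) p.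
  by apply: differentiable_ln => //; exact: QQpos.
have d1 : differentiable (fun q => 2/3 * Fh q) p by exact: diff_scale.
have d2 : differentiable (fun q => 1/3 * ln ((Q * Q) q)) p by exact: diff_scale.
pose S := (fun q => 2/3 * Fh q) + (fun q => 1/3 * ln ((Q * Q) q)).
have -> : phi = (fun q => expR (S q)) by [].
rewrite partial_exp; last exact: differentiableD.
rewrite partialD // !partial_scale // partial_ln //; last exact: QQpos.
rewrite partialM //.
have := hQ Up => Q0.
rewrite /=; congr (_ * _).
rewrite (_ : (Q * Q) p = Q p * Q p) //.
move: Q0; move: (partial k Fh p) (partial k Q p) (Q p) => A B C C0.
by field.
Qed.

Definition omh k p := omodel F k p - partial k phi p / (2 * phi p).

Lemma Em_eq p m : U p ->
  partial m Q p + (if m == y then partial y Fh p else 0) * Q p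
  - (if m == u then 2 * Fu p else 0) * Q p = - 3 * omh m p * Q p.
Proof.
move=> Up; rewrite /omh dphi // /omodel [partial m Fh p]dFE.
have Q0 := hQ Up; have P0 : phi p != 0 by rewrite gt_eqF // phi_pos.
have [->|my] := eqVneq m y.
  rewrite ?isimp.
  move: (partial y Q p) (Q p) (phi p) (partial y Fh p) (Fu p) Q0 P0 => A B C D E B0 C0.
  by field; rewrite B0 C0.
rewrite ?(negbTE my).
have [->|mu] := eqVneq m u.
  rewrite ?isimp.
  move: (partial u Q p) (Q p) (phi p) (partial y Fh p) (Fu p) Q0 P0 => A B C D E B0 C0.
  by field; rewrite B0 C0.
rewrite ?(negbTE mu).
move: (partial m Q p) (Q p) (phi p) Q0 P0 => A B C B0 C0.
by field; rewrite B0 C0.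
Qed.

Hypothesis hrec : recurrent_on U Gam.

Lemma theta_eq p m : U p -> forall theta : 'I_(n.+2) -> V -> R,
  (forall p, U p -> forall m l i j k,
    nablaCurv Gam m l i j k p = theta m p * Curv Gam l i j k p) ->
  theta m p = - 3 * omh m p.
Proof.
move=> Up th hth.
have := hth p Up m e1 y u e1; rewrite nablaC // CurvQ // Em_eq // => E.
by apply: (mulIf (hQ Up)); rewrite -E.
Qed.

Lemma special_phi : special_conf U Gam (gmodel F a) phi.
Proof.
exists omh; split.
  move=> p Up k i j; rewrite conf1 //; last by rewrite gt_eqF // phi_pos.
  by apply: (Smk_diff ((smoothP _ phi).1 phi_smooth 0)).
move=> p Up m l i j k.
case: hrec => th hth.
by rewrite hth // (theta_eq m Up hth).
Qed.

Lemma unique_phi (psi : V -> R) : connected U ->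
  smooth_on U psi -> (forall p, U p -> 0 < psi p) ->
  special_conf U Gam (gmodel F a) psi ->
  forall p0, U p0 -> forall p, U p -> psi p = (psi p0 / phi p0) * phi p.
Proof.
move=> cU spsi ppos [om' [h1 h2]] p0 Up0.
have dpsi q : U q -> differentiable psi q.
  by move=> Uq; apply: (Smk_diff ((smoothP _ psi).1 spsi 0)).
have dphi_ q : U q -> differentiable phi q.
  by move=> Uq; apply: (Smk_diff ((smoothP _ phi).1 phi_smooth 0)).
have psi0 q : U q -> psi q != 0 by move=> Uq; rewrite gt_eqF // ppos.
have phi0 q : phi q != 0 by rewrite gt_eqF // phi_pos.
have om'E q m : U q -> om' m q = omodel F m q - partial m psi q / (2 * psi q).
  move=> Uq; have := h1 q Uq m v u.
  rewrite conf1 //; try exact: dpsi; try exact: psi0.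
  rewrite /conf gcol_u eqxx mulr1.
  move=> E; apply/esym; apply: (mulIf (psi0 q Uq)); apply: (@mulfI _ (-2)) => //.
  by rewrite !mulrA E.
have om'E2 q m : U q -> om' m q = omh m q.
  move=> Uq; have := h2 q Uq m e1 y u e1.
  rewrite nablaC // CurvQ // Em_eq // => E.
  apply: (@mulfI _ (-3)) => //; apply: (mulIf (hQ Uq)).
  by rewrite E.
pose r := fun q => psi q * (phi q)^-1.
have dr q : U q -> differentiable r q.
  move=> Uq; apply: differentiableM; first exact: dpsi.
  by apply: differentiableV => //; exact: dphi_.
have pr j q : U q -> partial j r q = 0.
  move=> Uq; rewrite (_ : r = psi * (fun q => (phi q)^-1)) //.
  rewrite partialM //; [|exact: dpsi|by apply: differentiableV => //; exact: dphi_].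
  rewrite partial_inv //; last exact: dphi_.
  have := om'E2 q j Uq; rewrite om'E // /omh => /addrI /oppr_inj E.
  have P0 := phi0 q; have S0 := psi0 q Uq.
  move: E; rewrite /=.
  move: (partial j psi q) (partial j phi q) (psi q) (phi q) P0 S0 => A B C D D0 C0 E.
  have -> : A = C * B / D.
    have := congr1 (fun x => x * (2 * C)) E; rewrite /= mulfVK; last first.
      by rewrite mulf_neq0.
    move=> ->; field; by rewrite D0.
  field; by rewrite D0.
move=> p Up.
have := const_conn oU cU dr pr Up0 Up; rewrite /r => E.
by rewrite -E mulfVK.
Qed.

End Model.


Theorem mainTheorem14 (R : realType) (n : nat)
  (U : set 'rV[R]_(n.+2)) (F : R -> R -> R) (a : R -> R)
  (Gam : 'I_(n.+2) -> 'I_(n.+2) -> 'I_(n.+2) -> 'rV[R]_(n.+2) -> R) :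
  (2 <= n)%N ->
  open U -> connected U -> U !=set0 ->
  smooth_on U (Fhat F) ->
  smooth_on U (fun p => a (p 0 (u_idx n))) ->
  (forall p, U p ->
     partial (u_idx n) (partial (u_idx n) (Fhat F)) p
     - (partial (u_idx n) (Fhat F) p) ^+ 2 = - a (p 0 (u_idx n))) ->
  (forall p, U p ->
     partial (xn_idx n) (partial (u_idx n) (Fhat F)) p != 0) ->
  weyl_on U Gam (gmodel F a) (omodel F) ->
  recurrent_on U Gam ->
  exists phi : 'rV[R]_(n.+2) -> R,
    [/\ smooth_on U phi, (forall p, U p -> 0 < phi p),
        special_conf U Gam (gmodel F a) phi &
        (forall psi : 'rV[R]_(n.+2) -> R,
            smooth_on U psi -> (forall p, U p -> 0 < psi p) ->
            special_conf U Gam (gmodel F a) psi ->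
            exists2 c : R, 0 < c & forall p, U p -> psi p = c * phi p)].
Proof.
move=> n2 oU cU [p0 Up0] sF sa _ hQ hW hrec.
exists (phi F); split.
- exact: (phi_smooth oU sF hQ).
- by move=> p _; exact: phi_pos.
- exact: (special_phi n2 oU sF sa hW hQ hrec).
- move=> psi spsi ppos sc.
  exists (psi p0 / phi F p0).
    by rewrite divr_gt0 ?ppos ?phi_pos.
  exact: (unique_phi n2 oU sF sa hW hQ cU spsi ppos sc Up0).
Qed.
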